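(* Let $p$ be an odd prime, $m=p-1$, and suppose $q=2m+1$ is also prime. Let $A_1$ be the $m\times m$ matrix with $(i,j)$ entry $ij\pmod q$, $1\le i,j\le m$, and let $E=w(A_1)/2$ (entrywise). Then $E$ is an $m\times m$ Latin hypercube design and $d_1(E)=\lfloor (m+1)m/3\rfloor$; in particular $E$ attains the upper bound on $d_1$ over all $m\times m$ LHDs.
   Context: The modified Williams transformation $w:\{0,\ldots,q-1\}\to\{0,\ldots,q-1\}$ is $w(x)=2x$ for $0\le x<q/2$ and $w(x)=2(q-x)$ for $q/2\le x<q$. ($A_1$ is the leading $m\times m$ principal submatrix of the $(2m+1)\times 2m$ good lattice point set whose $i$th row is $i\cdot(1,\ldots,2m)\pmod q$.) An $m\times m$ LHD is a matrix each of whose columns is a permutation of $\{1,\ldots,m\}$; $d_1(X)=\min_{i<j}\sum_k|x_{ik}-x_{jk}|$. *)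

(* Defs.v *)
From mathcomp Require Import all_boot all_order all_algebra.
Set Implicit Arguments. Unset Strict Implicit. Unset Printing Implicit Defensive.

(* Matrices are indexed by ordinals 'I_m = {0..m-1}; row/column index i
   stands for the paper's index i+1. Entries are natural numbers. *)

Definition williams (q x : nat) : nat :=
  if 2 * x < q then 2 * x else 2 * (q - x).

Definition A1 (q m : nat) : 'M[nat]_m :=
  \matrix_(i < m, j < m) (((i.+1) * (j.+1)) %% q).

Definition Emat (q m : nat) : 'M[nat]_m :=
  \matrix_(i < m, j < m) (williams q (A1 q m i j) %/ 2).

Definition is_LHD (m : nat) (X : 'M[nat]_m) : Prop :=
  forall j : 'I_m, perm_eq [seq X i j | i <- enum 'I_m] (iota 1 m).

Definition absdiff (a b : nat) : nat := (a - b) + (b - a).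

Definition rowdist (m : nat) (X : 'M[nat]_m) (i j : 'I_m) : nat :=
  \sum_(k < m) absdiff (X i k) (X j k).

(* d_1(X) = min_{i<j} rowdist X i j  (0 by convention if there are < 2 rows) *)
Definition d1 (m : nat) (X : 'M[nat]_m) : nat :=
  let s := [seq rowdist X i j | i : 'I_m <- enum 'I_m, j : 'I_m <- [seq k : 'I_m <- enum 'I_m | i < k]] in
  foldr minn (head 0 s) s.

(* Main.v *)
Require Import Defs.
From mathcomp Require Import all_boot all_order all_algebra.
From mathcomp Require Import zify.

Definition gq q r := if 2 * r < q then r else q - r.
Definition Gq q a k := gq q ((a * k) %% q).

Lemma williams_half q x : williams q x %/ 2 = gq q x.
Proof. by rewrite /williams /gq; case: ifP => _; rewrite mulKn. Qed.

Lemma mod_lt2 q z : z < 2 * q -> z %% q = if z < q then z else z - q.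
Proof.
move=> hz; case: ifP => h; first by rewrite modn_small.
have -> : z = (z - q) + q by lia.
rewrite modnDr modn_small //; lia.
Qed.

Lemma gq_neg m x y : (x + y) %% (2 * m + 1) = 0 ->
  gq (2 * m + 1) (x %% (2 * m + 1)) = gq (2 * m + 1) (y %% (2 * m + 1)).
Proof.
set q := 2 * m + 1 => h.
have hq : 0 < q by rewrite /q; lia.
have hr := ltn_pmod x hq; have hs := ltn_pmod y hq.
rewrite -modnDm in h; rewrite mod_lt2 in h; last by lia.
move: h; rewrite /gq /q.
move: (x %% q) (y %% q) hr hs => r s hr hs.
case: ifP => h1; rewrite /q in hr hs *; case: ifP => h2; case: ifP => h3; lia.
Qed.

Lemma absmin m r s : r < 2 * m + 1 -> s < 2 * m + 1 ->
  absdiff (gq (2 * m + 1) r) (gq (2 * m + 1) s) =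
  minn (gq (2 * m + 1) ((r + (2 * m + 1 - s)) %% (2 * m + 1))) (gq (2 * m + 1) ((r + s) %% (2 * m + 1))).
Proof.
move=> hr hs.
rewrite (mod_lt2 _ (r + (_ - _))); last by lia.
rewrite (mod_lt2 _ (r + s)); last by lia.
case: ifP => h1; case: ifP => h2; rewrite /absdiff /gq;
  case: ifP => h3; case: ifP => h4; case: ifP => h5; case: ifP => h6; lia.
Qed.

Lemma mod_sub q x y : 0 < q -> (((x + y) %% q) + (q - y %% q)) %% q = x %% q.
Proof.
move=> hq; rewrite modnDml.
have hy := ltn_pmod y hq.
have -> : x + y + (q - y %% q) = (y %/ q).+1 * q + x.
  rewrite {1}(divn_eq y q) mulSn; lia.
by rewrite modnMDl.
Qed.


Lemma mulmod_inj q w k k' : coprime w q -> k < q -> k' < q ->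
  (w * k) %% q = (w * k') %% q -> k = k'.
Proof.
move=> hc hk hk' e.
wlog le : k k' hk hk' e / k <= k'.
  move=> W; case: (leqP k k') => h; first exact: W.
  by symmetry; apply: W => //; apply: ltnW.
have : w * k' == w * k %[mod q] by rewrite e.
rewrite eqn_mod_dvd ?leq_mul2l ?le ?orbT // -mulnBr Gauss_dvdr; last by rewrite coprime_sym.
case: (posnP (k' - k)) => h; first by lia.
by rewrite gtnNdvd //; lia.
Qed.

Lemma sum_mul q w (F : nat -> nat) : 0 < q -> coprime w q ->
  \sum_(k < q) F ((w * k) %% q) = \sum_(k < q) F k.
Proof.
move=> hq hc.
pose h (k : 'I_q) := Ordinal (ltn_pmod (w * k) hq).
have hinj : injective h.
  move=> x y /(congr1 val) /= e; apply: val_inj.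
  exact: mulmod_inj hc (ltn_ord x) (ltn_ord y) e.
by rewrite [RHS](reindex_inj hinj).
Qed.

Lemma halving m (phi : nat -> nat) : phi 0 = 0 ->
  (forall k, 0 < k < 2 * m + 1 -> phi (2 * m + 1 - k) = phi k) ->
  \sum_(k < 2 * m + 1) phi k = 2 * \sum_(k < m) phi k.+1.
Proof.
move=> h0 hs.
have -> : 2 * m + 1 = (m + m).+1 by lia.
rewrite big_ord_recl h0 add0n big_split_ord /=.
rewrite mul2n -addnn; congr (_ + _).
rewrite (reindex_inj rev_ord_inj) /=.
apply: eq_bigr => i _.
have hi := ltn_ord i.
rewrite /bump /= -hs; last by lia.
congr phi; lia.
Qed.

Lemma cop_lt q u : prime q -> 0 < u < q -> coprime u q.
Proof.
move=> hq /andP[h1 h2]; by rewrite coprime_sym prime_coprime // gtnNdvd.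
Qed.

Definition Dsum q a b := \sum_(k < q) absdiff (Gq q a k) (Gq q b k).
Definition Msum q a b := \sum_(k < q) minn (Gq q a k) (Gq q b k).
Definition Gs q := \sum_(k < q) gq q k.

Lemma stepA q a b : 0 < q -> coprime a q -> coprime b q ->
  Dsum q a b + 2 * Msum q a b = 2 * Gs q.
Proof.
move=> hq ha hb.
rewrite /Dsum /Msum big_distrr -big_split /=.
rewrite (eq_bigr (fun k : 'I_q => Gq q a k + Gq q b k)); last first.
  move=> i _; rewrite /absdiff; lia.
rewrite big_split /= /Gq (@sum_mul _ _ (gq q)) // (@sum_mul _ _ (gq q)) //.
rewrite /Gs; lia.
Qed.

Lemma stepB m a b : b < a -> a + b < 2 * m + 1 ->
  Dsum (2 * m + 1) a b = Msum (2 * m + 1) (a - b) (a + b).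
Proof.
move=> hab hs; rewrite /Dsum /Msum; apply: eq_bigr => k _.
have hq : 0 < 2 * m + 1 by rewrite addn1.
rewrite /Gq absmin ?ltn_pmod //.
have -> : a * k = (a - b) * k + b * k by rewrite -mulnDl subnK // ltnW.
rewrite (mod_sub (2 * m + 1) ((a - b) * k) (b * k) hq).
rewrite modnDml modnDmr -addnA -!mulnDl.
have -> : a - b + (b + b) = a + b by lia.
done.
Qed.

Lemma stepC q a b : 0 < q -> coprime 2 q ->
  Msum q (2 * b) (2 * a) = Msum q a b.
Proof.
move=> hq h2; rewrite /Msum.
rewrite (eq_bigr (fun k : 'I_q => (fun j => minn (Gq q b j) (Gq q a j)) ((2 * k) %% q))).
  by rewrite (@sum_mul _ _ (fun j => minn (Gq q b j) (Gq q a j))) //; apply: eq_bigr => i _; rewrite minnC.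
by move=> i _; rewrite /Gq !modnMmr !mulnA [b * 2]mulnC [a * 2]mulnC.
Qed.

Lemma equidist m a b : prime (2 * m + 1) -> 0 < b -> b < a -> a <= m ->
  3 * Dsum (2 * m + 1) a b = 2 * Gs (2 * m + 1).
Proof.
move=> hp hb hab ham.
have hq : 0 < 2 * m + 1 by lia.
have c2 : coprime 2 (2 * m + 1) by apply: cop_lt => //; lia.
have ca : coprime a (2 * m + 1) by apply: cop_lt => //; lia.
have cb : coprime b (2 * m + 1) by apply: cop_lt => //; lia.
have cu : coprime (a - b) (2 * m + 1) by apply: cop_lt => //; lia.
have cv : coprime (a + b) (2 * m + 1) by apply: cop_lt => //; lia.
have A1 := stepA _ _ _ hq ca cb.
have A2 := stepA _ _ _ hq cu cv.
have B1 : Dsum (2 * m + 1) a b = Msum (2 * m + 1) (a - b) (a + b) by apply: stepB; lia.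
have B2 : Dsum (2 * m + 1) (a + b) (a - b) =
   Msum (2 * m + 1) (a + b - (a - b)) (a + b + (a - b)) by apply: stepB; lia.
have S : Dsum (2 * m + 1) (a - b) (a + b) = Dsum (2 * m + 1) (a + b) (a - b).
  by rewrite /Dsum; apply: eq_bigr => i _; rewrite /absdiff addnC.
have E1 : a + b - (a - b) = 2 * b by lia.
have E2 : a + b + (a - b) = 2 * a by lia.
rewrite E1 E2 stepC // in B2.
move: A1 A2 B1 B2 S.
move: (Dsum _ a b) (Msum _ a b) (Dsum _ (a - b) (a + b)) (Msum _ (a - b) (a + b))
  (Dsum _ (a + b) (a - b)) (Gs _) => x1 x2 x3 x4 x5 x6.
lia.
Qed.


Lemma Emat_E q m (i k : 'I_m) : Emat q m i k = Gq q i.+1 k.+1.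
Proof. by rewrite !mxE williams_half. Qed.

Lemma Gq_sym m a k : k < 2 * m + 1 ->
  Gq (2 * m + 1) a (2 * m + 1 - k) = Gq (2 * m + 1) a k.
Proof.
move=> hk; rewrite /Gq; apply: gq_neg.
by rewrite -mulnDr (subnK (ltnW hk)) modnMl.
Qed.

Lemma Gq0 q a : 0 < q -> Gq q a 0 = 0.
Proof. by move=> hq; rewrite /Gq muln0 mod0n /gq muln0 hq. Qed.

Lemma rowdistE m (i j : 'I_m) :
  2 * rowdist (Emat (2 * m + 1) m) i j = Dsum (2 * m + 1) i.+1 j.+1.
Proof.
rewrite /Dsum (@halving m (fun k => absdiff (Gq (2 * m + 1) i.+1 k) (Gq (2 * m + 1) j.+1 k))).
- by rewrite /rowdist; congr (2 * _); apply: eq_bigr => k _; rewrite !Emat_E.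
- by rewrite !Gq0 ?addn1.
- move=> k /andP[_ hk]; by rewrite !Gq_sym.
Qed.

Lemma GsE m : Gs (2 * m + 1) = m * (m + 1).
Proof.
rewrite /Gs (@halving m (gq (2 * m + 1))).
- rewrite (eq_bigr (fun k : 'I_m => k.+1)); last first.
    move=> k _; have := ltn_ord k; rewrite /gq; case: ifP => //; lia.
  elim: m => [|n IH]; first by rewrite big_ord0.
  rewrite big_ord_recr /= mulnDr IH; lia.
- by rewrite /gq muln0 addn1.
- move=> k /andP[h1 h2].
  have := @gq_neg m (2 * m + 1 - k) k; rewrite (subnK (ltnW h2)) modnn => /(_ erefl).
  by rewrite !modn_small //; lia.
Qed.

Lemma rowdist_val m (i j : 'I_m) : prime (2 * m + 1) -> i < j ->
  3 * rowdist (Emat (2 * m + 1) m) i j = m * (m + 1).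
Proof.
move=> hp hij.
have hs : rowdist (Emat (2 * m + 1) m) i j = rowdist (Emat (2 * m + 1) m) j i.
  by rewrite /rowdist; apply: eq_bigr => k _; rewrite /absdiff addnC.
have := @equidist m j.+1 i.+1 hp erefl hij (ltn_ord j).
rewrite -rowdistE -hs GsE; lia.
Qed.


Lemma colsum m (X : 'M[nat]_m) (k : 'I_m) (F : nat -> nat) :
  perm_eq [seq X i k | i <- enum 'I_m] (iota 1 m) ->
  \sum_(i < m) F (X i k) = \sum_(x <- iota 1 m) F x.
Proof. by move=> h; rewrite -(perm_big _ h) big_map big_enum. Qed.

Definition Tsum m := \sum_(x <- iota 1 m) \sum_(y <- iota 1 m) absdiff x y.

Lemma totalsum m (X : 'M[nat]_m) : is_LHD X ->
  \sum_(i < m) \sum_(j < m) rowdist X i j = m * Tsum m.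
Proof.
move=> hX.
rewrite /rowdist.
rewrite (eq_bigr (fun i : 'I_m => \sum_(k < m) \sum_(j < m) absdiff (X i k) (X j k))); last first.
  by move=> i _; rewrite exchange_big.
rewrite exchange_big /=.
rewrite (eq_bigr (fun k : 'I_m => Tsum m)); last first.
  move=> k _.
  rewrite (@colsum _ _ _ (fun x => \sum_(j < m) absdiff x (X j k))) //.
  rewrite /Tsum; apply: eq_bigr => x _.
  exact: (@colsum _ _ _ (fun y => absdiff x y)).
by rewrite sum_nat_const card_ord.
Qed.

Lemma rowdist0 m (X : 'M[nat]_m) i : rowdist X i i = 0.
Proof. by rewrite /rowdist big1 // => k _; rewrite /absdiff subnn. Qed.

Lemma rowdistC m (X : 'M[nat]_m) i j : rowdist X i j = rowdist X j i.
Proof. by rewrite /rowdist; apply: eq_bigr => k _; rewrite /absdiff addnC. Qed.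

Lemma offdiag m (R : 'I_m -> 'I_m -> nat) :
  (forall i, R i i = 0) ->
  \sum_(i < m) \sum_(j < m) R i j = \sum_(i < m) \sum_(j < m | j != i) R i j.
Proof.
move=> h0; apply: eq_bigr => i _; by rewrite (bigD1 i) //= h0.
Qed.

Lemma foldr_min_le (s : seq nat) x0 y : y \in s -> foldr minn x0 s <= y.
Proof.
elim: s => //= z s IH; rewrite in_cons => /orP[/eqP -> | h].
  exact: geq_minl.
by rewrite geq_min IH ?orbT.
Qed.

Lemma foldr_min_c (s : seq nat) c x0 :
  (forall y, y \in s -> y = c) -> x0 = c -> foldr minn x0 s = c.
Proof.
move=> h hx; elim: s h => /= [|w s IH] h //.
rewrite IH; last by move=> y hy; apply: h; rewrite in_cons hy orbT.
by rewrite (h w (mem_head _ _)) minnn.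
Qed.

Lemma foldr_min_const (s : seq nat) c :
  (forall y, y \in s -> y = c) -> s != [::] -> foldr minn (head 0 s) s = c.
Proof.
case: s => // z s h _; rewrite (@foldr_min_c (z :: s) c z h) //.
by apply: h; rewrite mem_head.
Qed.

Definition d1seq {m} (X : 'M[nat]_m) :=
  [seq rowdist X i j | i : 'I_m <- enum 'I_m, j : 'I_m <- [seq k : 'I_m <- enum 'I_m | i < k]].

Lemma d1E m (X : 'M[nat]_m) : d1 X = foldr minn (head 0 (d1seq X)) (d1seq X).
Proof. by []. Qed.

Lemma mem_d1seq m (X : 'M[nat]_m) (i j : 'I_m) : i < j -> rowdist X i j \in d1seq X.
Proof.
move=> h; apply/allpairsPdep; exists i, j; split => //; first by rewrite mem_enum.
by rewrite mem_filter h mem_enum.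
Qed.

Lemma d1seqP m (X : 'M[nat]_m) y : y \in d1seq X -> exists i j : 'I_m, i < j /\ y = rowdist X i j.
Proof.
move=> /allpairsPdep [i [j [_ hj ->]]]; exists i, j; split => //.
by move: hj; rewrite mem_filter => /andP[].
Qed.

Lemma d1_le m (X : 'M[nat]_m) (i j : 'I_m) : i != j -> d1 X <= rowdist X i j.
Proof.
move=> hij; rewrite d1E; apply: foldr_min_le.
case: (ltngtP i j) => h.
- exact: mem_d1seq.
- by rewrite rowdistC; apply: mem_d1seq.
- by move: hij; rewrite (val_inj h) eqxx.
Qed.


Lemma gq_range m r : 0 < r < 2 * m + 1 -> 0 < gq (2 * m + 1) r <= m.
Proof. move=> /andP[h1 h2]; rewrite /gq; case: ifP; lia. Qed.

Lemma gq_inj m r s : r < 2 * m + 1 -> s < 2 * m + 1 ->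
  gq (2 * m + 1) r = gq (2 * m + 1) s -> r = s \/ r + s = 2 * m + 1.
Proof. move=> h1 h2; rewrite /gq; case: ifP => h3; case: ifP => h4; lia. Qed.

Lemma E_LHD m : prime (2 * m + 1) -> is_LHD (Emat (2 * m + 1) m).
Proof.
move=> hp j.
have hq : 0 < 2 * m + 1 by rewrite addn1.
have nd x : 0 < x -> x < 2 * m + 1 -> ~~ (2 * m + 1 %| x * j.+1).
  move=> h1 h2; rewrite Euclid_dvdM // negb_or !gtnNdvd //.
  by have := ltn_ord j; lia.
have pos (i : 'I_m) : 0 < (i.+1 * j.+1) %% (2 * m + 1).
  rewrite lt0n; apply/negP => /eqP hd.
  by move: (nd i.+1 erefl ltac:(have := ltn_ord i; lia)); rewrite /dvdn hd.
have hinj : injective (fun i : 'I_m => Emat (2 * m + 1) m i j).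
  move=> i i'; rewrite !Emat_E /Gq.
  move/gq_inj => /(_ (ltn_pmod _ hq) (ltn_pmod _ hq)) [e | e].
  - apply: val_inj; apply: succn_inj.
    apply: (@mulmod_inj (2 * m + 1) j.+1); rewrite ?(mulnC j.+1) //.
    + by apply: cop_lt => //; case: (j) => x hx /=; lia.
    + by case: (i) => x hx /=; lia.
    + by case: (i') => x hx /=; lia.
  - exfalso.
    have : (i.+1 + i'.+1) * j.+1 %% (2 * m + 1) = 0.
      by rewrite mulnDl -modnDm e modnn.
    move=> hd.
    by move: (nd (i.+1 + i'.+1) erefl ltac:(have := ltn_ord i; have := ltn_ord i'; lia)); rewrite /dvdn hd.
set s := [seq _ | _ <- _].
have us : uniq s by rewrite map_inj_uniq // enum_uniq.
have sub : {subset s <= iota 1 m}.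
  move=> x /mapP [i _ ->]; rewrite mem_iota Emat_E /Gq.
  have := @gq_range m ((i.+1 * j.+1) %% (2 * m + 1)).
  rewrite pos ltn_pmod //= => /(_ isT); lia.
have hsz : size (iota 1 m) <= size s by rewrite size_iota size_map size_enum_ord.
have [_ eqs] := uniq_min_size us sub hsz.
by apply: uniq_perm => //; apply: iota_uniq.
Qed.


Lemma main_m m : prime (2 * m + 1) -> 2 <= m ->
  [/\ is_LHD (Emat (2 * m + 1) m),
      d1 (Emat (2 * m + 1) m) = ((m + 1) * m) %/ 3
    & forall X : 'M[nat]_m, is_LHD X -> d1 X <= d1 (Emat (2 * m + 1) m)].
Proof.
move=> hp hm.
set E := Emat (2 * m + 1) m.
set c := ((m + 1) * m) %/ 3.
have hc : forall i j : 'I_m, i != j -> rowdist E i j = c.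
  have key : forall i j : 'I_m, i < j -> rowdist E i j = c.
    move=> i j hij; have h3 := rowdist_val _ _ _ hp hij.
    by rewrite /c (mulnC (m + 1)) -h3 mulKn.
  move=> i j hij; case: (ltngtP i j) => h.
  - exact: key.
  - by rewrite rowdistC; apply: key.
  - by move: hij; rewrite (val_inj h) eqxx.
have hd1 : d1 E = c.
  rewrite d1E; apply: foldr_min_const.
    move=> y /d1seqP [i [j [hij ->]]]; apply: hc; by rewrite neq_ltn hij.
  have h01 : (Ordinal (ltnW hm) : 'I_m) < (Ordinal hm : 'I_m) by [].
  by apply/eqP => e; move: (@mem_d1seq m E _ _ h01); rewrite e.
have cnt (d : nat) : \sum_(i < m) \sum_(j < m | j != i) d = m * (m - 1) * d.
  rewrite (eq_bigr (fun _ => (m - 1) * d)); last first.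
    by move=> i _; rewrite sum_nat_const cardC1 card_ord subn1.
  by rewrite sum_nat_const card_ord mulnA.
split => //; first exact: (@E_LHD m hp).
move=> X hX; rewrite hd1.
have h1 : m * (m - 1) * d1 X <= m * (m - 1) * c.
  rewrite -!cnt; apply: (@leq_trans (\sum_(i < m) \sum_(j < m | j != i) rowdist X i j)).
    by apply: leq_sum => i _; apply: leq_sum => j hj; apply: d1_le; rewrite eq_sym.
  rewrite -offdiag; last by move=> i; apply: rowdist0.
  rewrite (@totalsum m X hX) -(@totalsum m E (@E_LHD m hp)) offdiag; last by move=> i; apply: rowdist0.
  apply: eq_leq; apply: eq_bigr => i _; apply: eq_bigr => j hj; apply: hc; by rewrite eq_sym.
by rewrite leq_pmul2l in h1 => //; rewrite muln_gt0; lia.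
Qed.

Theorem corollary1 (p m q : nat) :
  prime p -> odd p -> m = p - 1 -> q = 2 * m + 1 -> prime q ->
  [/\ is_LHD (Emat q m),
      d1 (Emat q m) = ((m + 1) * m) %/ 3
    & forall X : 'M[nat]_m, is_LHD X -> d1 X <= d1 (Emat q m)].
Proof.
move=> hp ho hm hq; subst q => hq.
apply: main_m => //.
have h1 := prime_gt1 hp.
have : p != 2 by apply/eqP => e; move: ho; rewrite e.
lia.
Qed.
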